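(* Let $C,A^1,\dots,A^m\in\mathbb{S}^n$, $b\in\mathbb{R}^m$, with $\mathbf{P}$ and $\mathbf{D}$ feasible and $\mathbf{D}$ of singularity degree one, and let $0\le r<n$ be such that, writing $L(y)=C-\sum_iA^iy_i$ in blocks $L_{11}(y)\in\mathbb{S}^r$, $L_{12}(y)\in\mathbb{R}^{r\times(n-r)}$, $L_{22}(y)\in\mathbb{S}^{n-r}$: (a) for every $y$, $L(y)\succeq0$ iff $L_{12}(y)=0$, $L_{22}(y)=0$, $L_{11}(y)\succeq0$; (b) some $y$ has $L_{12}(y)=0$, $L_{22}(y)=0$, $L_{11}(y)\succ0$; (c) there is $X=\mathrm{diag}(0,X_{22})$ with $X_{22}\succ0$, $C\bullet X=0$, $A^i\bullet X=0$ for all $i$. Let $M>0$ be a constant such that for all $t\ge0$ and $y$, $L_{22}(y)+tI_{22}\succeq0$ implies $tMI_{22}\succeq L_{22}(y)+tI_{22}$, and set $K:=M(v(\mathbf{P})-v(\mathbf{D})+2)$. For $\alpha>0$, $t>0$ consider $$\mathbf{RD1}(\alpha,t):\ \max_y\ b^Ty-\frac{\|L_{12}(y)\|_F^2}{M\alpha}\ \text{ s.t. } L(y)+t\alpha I\succeq0 .$$ Then for every $\alpha>0$ there exists $\hat t_\alpha>0$ such that, for every $t\in(0,\hat t_\alpha)$ and every optimal sequence $\{y^k\}$ of $\mathbf{RD1}(\alpha,t)$, we have $\|L_{12}(y^k)\|_F^2\le K\alpha$ for all sufficiently large $k$.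
   Context: $\mathbf{P}$: $\min_X C\bullet X$ s.t. $A^i\bullet X=b_i$, $X\succeq0$; $\mathbf{D}$: $\max_y b^Ty$ s.t. $C-\sum_iA^iy_i\succeq0$; $v(\mathbf{P}),v(\mathbf{D})$ are their (finite) optimal values. $\mathbf{D}$ has singularity degree one if it is feasible and there exists a nonzero $X\succeq0$ with $C\bullet X=0$, $A^i\bullet X=0$ for all $i$, such that some $y$ has $C-\sum_iA^iy_i$ in the relative interior of $\{Z\succeq0: Z\bullet X=0\}$. An optimal sequence of $\mathbf{RD1}(\alpha,t)$ is a sequence of feasible points whose objective values converge to the optimal value (supremum) of $\mathbf{RD1}(\alpha,t)$. $\|\cdot\|_F$ is the Frobenius norm; $I_{22}$ is the $(n-r)\times(n-r)$ identity. *)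

(* Defs.v *)
From HB Require Import structures.
From mathcomp Require Import all_boot all_order all_algebra.
From mathcomp Require Import all_classical all_reals all_analysis.
Set Implicit Arguments. Unset Strict Implicit. Unset Printing Implicit Defensive.
Import Order.TTheory GRing.Theory Num.Theory.
Local Open Scope ring_scope.
Local Open Scope classical_set_scope.

Section SDP.
Variable R : realType.

Definition symmx n (X : 'M[R]_n) : Prop := X^T = X.

Definition psd n (X : 'M[R]_n) : Prop :=
  symmx X /\ forall v : 'cV[R]_n, 0 <= (v^T *m X *m v) 0 0.
Definition pd n (X : 'M[R]_n) : Prop :=
  symmx X /\ forall v : 'cV[R]_n, v != 0 -> 0 < (v^T *m X *m v) 0 0.

Definition fdot m n (A X : 'M[R]_(m, n)) : R := \tr (A^T *m X).
Definition frob m n (A : 'M[R]_(m, n)) : R := Num.sqrt (fdot A A).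

Definition Lmap n m (C : 'M[R]_n) (A : 'I_m -> 'M[R]_n) (y : 'cV[R]_m)
  : 'M[R]_n := C - \sum_(i < m) y i 0 *: A i.

Definition bty m (b y : 'cV[R]_m) : R := \sum_(i < m) b i 0 * y i 0.

Definition P_feas n m (A : 'I_m -> 'M[R]_n) (b : 'cV[R]_m) : set 'M[R]_n :=
  [set X | psd X /\ forall i, fdot (A i) X = b i 0].
Definition D_feas n m (C : 'M[R]_n) (A : 'I_m -> 'M[R]_n) : set 'cV[R]_m :=
  [set y | psd (Lmap C A y)].

Definition vP n m (C : 'M[R]_n) (A : 'I_m -> 'M[R]_n) (b : 'cV[R]_m) : R :=
  inf [set fdot C X | X in P_feas A b].
Definition vD n m (C : 'M[R]_n) (A : 'I_m -> 'M[R]_n) (b : 'cV[R]_m) : R :=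
  sup [set bty b y | y in D_feas C A].

Definition aff_hull n (F : set 'M[R]_n) : set 'M[R]_n :=
  [set W | exists (k : nat) (Z : 'I_k -> 'M[R]_n) (lam : 'I_k -> R),
     (forall j, F (Z j)) /\ \sum_(j < k) lam j = 1 /\
     W = \sum_(j < k) lam j *: Z j].
Definition relint n (F : set 'M[R]_n) : set 'M[R]_n :=
  [set Z | F Z /\ exists eps : R, 0 < eps /\
     forall W, aff_hull F W -> frob (W - Z) < eps -> F W].

Definition sing_deg_one n m (C : 'M[R]_n) (A : 'I_m -> 'M[R]_n) : Prop :=
  (exists y, D_feas C A y) /\
  exists X : 'M[R]_n, X != 0 /\ psd X /\ fdot C X = 0 /\
    (forall i, fdot (A i) X = 0) /\
    exists y, relint [set Z | psd Z /\ fdot Z X = 0] (Lmap C A y).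

Definition RD1_obj r s m (C : 'M[R]_(r + s)) (A : 'I_m -> 'M[R]_(r + s))
  (b : 'cV[R]_m) (M alpha : R) (y : 'cV[R]_m) : R :=
  bty b y - (frob (ursubmx (Lmap C A y))) ^+ 2 / (M * alpha).
Definition RD1_feas r s m (C : 'M[R]_(r + s)) (A : 'I_m -> 'M[R]_(r + s))
  (alpha t : R) : set 'cV[R]_m :=
  [set y | psd (Lmap C A y + (t * alpha) *: 1%:M)].

Definition RD1_optseq r s m (C : 'M[R]_(r + s)) (A : 'I_m -> 'M[R]_(r + s))
  (b : 'cV[R]_m) (M alpha t : R) (y : nat -> 'cV[R]_m) : Prop :=
  (forall k, RD1_feas C A alpha t (y k)) /\
  ((fun k => (RD1_obj C A b M alpha (y k))%:E) @ \oo -->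
     ereal_sup [set (RD1_obj C A b M alpha z)%:E | z in RD1_feas C A alpha t]).

End SDP.

(* Main.v *)
Require Import Defs.
From HB Require Import structures.
From mathcomp Require Import all_boot all_order all_algebra.
From mathcomp Require Import all_classical all_reals all_analysis.
From mathcomp Require Import ring lra.
Import Order.TTheory GRing.Theory Num.Theory.
Set Implicit Arguments. Unset Strict Implicit.
Local Open Scope ring_scope.
Local Open Scope classical_set_scope.

Section Tr.
Variable R : realType.

Definition bf n (Q : 'M[R]_n) (u v : 'cV[R]_n) : R := (u^T *m Q *m v) 0 0.

Lemma bfDl n (Q : 'M[R]_n) u1 u2 v : bf Q (u1 + u2) v = bf Q u1 v + bf Q u2 v.
Proof. by rewrite /bf linearD /= !mulmxDl mxE. Qed.
Lemma bfDr n (Q : 'M[R]_n) u v1 v2 : bf Q u (v1 + v2) = bf Q u v1 + bf Q u v2.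
Proof. by rewrite /bf mulmxDr mxE. Qed.
Lemma bfZl n (Q : 'M[R]_n) c u v : bf Q (c *: u) v = c * bf Q u v.
Proof. by rewrite /bf linearZ /= -!scalemxAl mxE. Qed.
Lemma bfZr n (Q : 'M[R]_n) c u v : bf Q u (c *: v) = c * bf Q u v.
Proof. by rewrite /bf -scalemxAr mxE. Qed.
Lemma bfQB n (Q N : 'M[R]_n) c u v : bf (Q - c *: N) u v = bf Q u v - c * bf N u v.
Proof. by rewrite /bf mulmxBr mulmxBl -scalemxAr -scalemxAl !mxE. Qed.
Lemma tr11 (a : 'M[R]_1) : a 0 0 = a^T 0 0.
Proof. by rewrite mxE. Qed.
Lemma bf_sym n (Q : 'M[R]_n) u v : symmx Q -> bf Q u v = bf Q v u.
Proof.
move=> HQ; rewrite /bf [LHS]tr11.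
by rewrite !trmx_mul trmxK HQ mulmxA.
Qed.
Definition ev n (k : 'I_n) : 'cV[R]_n := delta_mx k 0.
Lemma bf_ev n (Q : 'M[R]_n) i j : bf Q (ev i) (ev j) = Q i j.
Proof. by rewrite /bf /ev trmx_delta -rowE -colE !mxE. Qed.
Lemma mx11_mul (a : 'M[R]_(1,1)) (c : 'M[R]_(1,1)) : (a *m c) 0 0 = a 0 0 * c 0 0.
Proof. by rewrite mxE big_ord1. Qed.
Lemma bf_outer n (w u v : 'cV[R]_n) : bf (w *m w^T) u v = (u^T *m w) 0 0 * (w^T *m v) 0 0.
Proof. by rewrite /bf !mulmxA -mx11_mul -mulmxA. Qed.
Lemma tr_outer n (P : 'M[R]_n) (w : 'cV[R]_n) : \tr (P *m (w *m w^T)) = bf P w w.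
Proof. by rewrite /bf mulmxA mxtrace_mulC mulmxA /mxtrace big_ord1. Qed.

Lemma symE n (Q : 'M[R]_n) i j : symmx Q -> Q j i = Q i j.
Proof. by move=> HQ; rewrite -[in LHS]HQ mxE. Qed.

Lemma psd_diag n (Q : 'M[R]_n) i : psd Q -> 0 <= Q i i.
Proof. by case=> _ H; rewrite -bf_ev; apply: H. Qed.

Lemma psd_row0 n (Q : 'M[R]_n) k j : psd Q -> Q k k = 0 -> Q k j = 0.
Proof.
move=> [HQs HQ] Ha; apply/eqP; apply/negPn/negP => Hq.
pose c := - (Q j j + 1) / (2 * Q k j).
have := HQ (c *: ev k + ev j); rewrite -/(bf Q _ _).
rewrite bfDl !bfDr !bfZl !bfZr !bf_ev Ha (symE k j HQs).
have -> : c * (c * 0) + c * Q k j + (c * Q k j + Q j j) = - 1.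
  rewrite /c; field; exact: Hq.
by rewrite ler0N1.
Qed.

Lemma trace_psd n (P Q : 'M[R]_n) : psd P -> psd Q -> 0 <= \tr (P *m Q).
Proof.
move=> HP.
suff H : forall d k, (n - k <= d)%N -> forall Q : 'M[R]_n, psd Q ->
  (forall i j : 'I_n, (i < k)%N -> Q i j = 0) -> 0 <= \tr (P *m Q).
  by move=> HQ; apply: (H n 0%N) => //; rewrite subn0.
elim=> [|d IH] k Hk Q0 HQ0 Hz.
  have -> : Q0 = 0.
    apply/matrixP => i j; rewrite mxE; apply: Hz.
    by move: Hk; rewrite leqn0 subn_eq0 => /(leq_trans (ltn_ord i)).
  by rewrite mulmx0 mxtrace0.
case: (ltnP k n) => hk; last first.
  have -> : Q0 = 0.
    apply/matrixP => i j; rewrite mxE; apply: Hz.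
    exact: (leq_trans (ltn_ord i)).
  by rewrite mulmx0 mxtrace0.
pose kk := Ordinal hk.
have Hk' : (n - k.+1 <= d)%N by rewrite subnS; move: Hk; case: (n - k)%N.
have [HQs HQq] := HQ0.
have := psd_diag kk HQ0; rewrite le_eqVlt => /orP [/eqP Ha|Ha].
  apply: (IH k.+1 Hk' Q0 HQ0) => i j; rewrite ltnS leq_eqVlt => /orP [/eqP Hi|Hi].
    have -> : i = kk by apply/val_inj.
    exact: psd_row0.
  exact: Hz.
pose a := Q0 kk kk.
pose w := col kk Q0.
pose Q' := Q0 - a^-1 *: (w *m w^T).
have HwE : forall u, (u^T *m w) 0 0 = bf Q0 u (ev kk).
  by move=> u; rewrite /bf /ev /w colE mulmxA.
have HwE' : forall u, (w^T *m u) 0 0 = bf Q0 u (ev kk).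
  by move=> u; rewrite [LHS]tr11 trmx_mul trmxK HwE.
have HQ' : psd Q'.
  split.
    by rewrite /symmx /Q' linearB /= linearZ /= trmx_mul trmxK HQs.
  move=> v; rewrite -/(bf Q' v v) bfQB bf_outer HwE HwE'.
  have := HQq (v - (bf Q0 v (ev kk) / a) *: ev kk).
  rewrite -/(bf Q0 _ _) -scaleNr bfDl !bfDr !bfZl !bfZr bf_ev -/a.
  rewrite (bf_sym (ev kk) v HQs).
  have Ha0 : a != 0 by rewrite /a gt_eqF.
  set x := bf Q0 v (ev kk); set y := bf Q0 v v.
  suff -> : y + - (x / a) * x + (- (x / a) * x + - (x / a) * (- (x / a) * a)) = y - a^-1 * (x * x) by [].
  by field.
have HzQ' : forall i j : 'I_n, (i < k.+1)%N -> Q' i j = 0.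
  move=> i j; rewrite /Q' !mxE big_ord1 !mxE.
  rewrite ltnS leq_eqVlt => /orP [/eqP Hi|Hi].
    have -> : i = kk by apply/val_inj.
    rewrite (symE _ _ HQs) -/a.
    have Ha0 : a != 0 by rewrite /a gt_eqF.
    by rewrite mulrA mulVf // mul1r subrr.
  by rewrite (Hz i j Hi) (Hz i kk Hi) mul0r mulr0 subrr.
have := IH k.+1 Hk' Q' HQ' HzQ'.
have -> : Q0 = Q' + a^-1 *: (w *m w^T) by rewrite /Q' subrK.
move=> H1; rewrite mulmxDr mxtraceD -scalemxAr mxtraceZ tr_outer.
apply: addr_ge0 => //; apply: mulr_ge0; first by rewrite invr_ge0 ltW.
by case: HP => _ ->.
Qed.

Lemma fdot_psd n (P Q : 'M[R]_n) : psd P -> psd Q -> 0 <= fdot P Q.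
Proof. by move=> HP HQ; rewrite /fdot (proj1 HP); exact: trace_psd. Qed.

Lemma fdotD n (P Q X : 'M[R]_n) : fdot (P + Q) X = fdot P X + fdot Q X.
Proof. by rewrite /fdot linearD /= mulmxDl mxtraceD. Qed.
Lemma fdotZ n c (P X : 'M[R]_n) : fdot (c *: P) X = c * fdot P X.
Proof. by rewrite /fdot linearZ /= -scalemxAl mxtraceZ. Qed.
Lemma fdotN n (P X : 'M[R]_n) : fdot (- P) X = - fdot P X.
Proof. by rewrite -scaleN1r fdotZ mulN1r. Qed.
Lemma fdot0 m n (X : 'M[R]_(m, n)) : fdot 0 X = 0.
Proof. by rewrite /fdot linear0 mul0mx mxtrace0. Qed.
Lemma fdot_sum n m (F : 'I_m -> 'M[R]_n) X :
  fdot (\sum_(i < m) F i) X = \sum_(i < m) fdot (F i) X.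
Proof.
apply: (big_morph (fun P => fdot P X)); last exact: fdot0.
by move=> P Q; rewrite fdotD.
Qed.
Lemma fdot1 n (X : 'M[R]_n) : fdot 1%:M X = \tr X.
Proof. by rewrite /fdot trmx1 mul1mx. Qed.
Lemma tr_psd n (X : 'M[R]_n) : psd X -> 0 <= \tr X.
Proof. by move=> HX; rewrite /mxtrace; apply: sumr_ge0 => i _; exact: psd_diag. Qed.

Lemma psdD n (P Q : 'M[R]_n) : psd P -> psd Q -> psd (P + Q).
Proof.
move=> [HPs HP] [HQs HQ]; split; first by rewrite /symmx linearD /= HPs HQs.
move=> v; rewrite mulmxDr mulmxDl mxE; exact: addr_ge0.
Qed.
Lemma psd_scal n (c : R) : 0 <= c -> psd (c *: (1%:M : 'M[R]_n)).
Proof.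
move=> Hc; split; first by rewrite /symmx linearZ /= trmx1.
move=> v; rewrite -scalemxAr mulmx1 -scalemxAl mxE; apply: mulr_ge0 => //.
rewrite mxE; apply: sumr_ge0 => i _; rewrite mxE -expr2; exact: sqr_ge0.
Qed.

Lemma weak_dual n m (C : 'M[R]_n) (A : 'I_m -> 'M[R]_n) b X y c :
  P_feas A b X -> psd (Lmap C A y + c *: 1%:M) ->
  bty b y <= fdot C X + c * \tr X.
Proof.
move=> [HX HXb] HL.
have := fdot_psd HL HX.
rewrite fdotD fdotZ fdot1 /Lmap fdotD fdotN fdot_sum.
have -> : \sum_(i < m) fdot (y i 0 *: A i) X = bty b y.
  by rewrite /bty; apply: eq_bigr => i _; rewrite fdotZ HXb mulrC.
move=> H; rewrite -subr_ge0; apply: le_trans H _; rewrite le_eqVlt; apply/orP; left.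
apply/eqP; ring.
Qed.
End Tr.
Unset Implicit Arguments.
Set Strict Implicit.

Theorem lemma4 (R : realType) (r s m : nat) (Hs : (0 < s)%N)
  (C : 'M[R]_(r + s)) (A : 'I_m -> 'M[R]_(r + s)) (b : 'cV[R]_m)
  (HCsym : symmx C) (HAsym : forall i, symmx (A i))
  (HPfeas : exists X, P_feas A b X)
  (HDfeas : exists y, D_feas C A y)
  (Hsd1 : sing_deg_one C A)
  (Ha : forall y : 'cV[R]_m,
      psd (Lmap C A y) <->
      [/\ ursubmx (Lmap C A y) = 0, drsubmx (Lmap C A y) = 0
        & psd (ulsubmx (Lmap C A y))])
  (Hb : exists y : 'cV[R]_m,
      [/\ ursubmx (Lmap C A y) = 0, drsubmx (Lmap C A y) = 0
        & pd (ulsubmx (Lmap C A y))])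
  (Hc : exists X22 : 'M[R]_s,
      pd X22 /\
      fdot C (block_mx 0 0 0 X22) = 0 /\
      forall i, fdot (A i) (block_mx 0 0 0 X22) = 0)
  (M : R) (HM : 0 < M)
  (HMbound : forall (t : R) (y : 'cV[R]_m), 0 <= t ->
      psd (drsubmx (Lmap C A y) + t *: 1%:M) ->
      psd ((t * M) *: 1%:M - (drsubmx (Lmap C A y) + t *: 1%:M))) :
  let K := M * (vP C A b - vD C A b + 2) in
  forall alpha : R, 0 < alpha ->
  exists that : R, 0 < that /\
    forall t : R, 0 < t -> t < that ->
    forall y : nat -> 'cV[R]_m,
      RD1_optseq C A b M alpha t y ->
      exists N : nat, forall k : nat, (N <= k)%N ->
        (frob (ursubmx (Lmap C A (y k)))) ^+ 2 <= K * alpha.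
Proof.
move=> K alpha Hal.
have [X0 HX0] := HPfeas.
have [y0 Hy0] := HDfeas.
have HDpsd : forall y, D_feas C A y -> psd (Lmap C A y + 0 *: 1%:M).
  by move=> y Hy; rewrite scale0r addr0.
have wd0 : forall X y, P_feas A b X -> D_feas C A y -> bty b y <= fdot C X.
  move=> X y HX Hy; have := weak_dual HX (HDpsd y Hy); by rewrite mul0r addr0.
have hsD : has_sup [set bty b y | y in D_feas C A].
  split; first by exists (bty b y0), y0.
  exists (fdot C X0) => _ [y Hy <-]; exact: wd0.
have hiP : has_inf [set fdot C X | X in P_feas A b].
  split; first by exists (fdot C X0), X0.
  exists (bty b y0) => _ [X HX <-]; exact: wd0.
have e4 : (0:R) < 1/4 by rewrite divr_gt0 // ltr0n.
have e2 : (0:R) < 1/2 by rewrite divr_gt0 // ltr0n.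
have [_ [yD HyD <-] HyDv] := sup_adherent e4 hsD.
have [_ [X1 HX1 <-] HX1v] := inf_adherent e2 hiP.
rewrite -/(vD C A b) in HyDv; rewrite -/(vP C A b) in HX1v.
have Htr : 0 <= \tr X1 by apply: tr_psd; case: HX1.
have H2 : 0 < 2 * alpha * (\tr X1 + 1) by rewrite mulr_gt0 ?mulr_gt0 // ltr_wpDl.
pose that := (2 * alpha * (\tr X1 + 1))^-1.
exists that; split; first by rewrite invr_gt0.
move=> t Ht Htt y [Hfeas Hcvg].
have Hta : t * alpha * \tr X1 < 1 / 2.
  move: Htt; rewrite /that -(ltr_pM2r H2) mulVf ?gt_eqF //.
  have -> : t * (2 * alpha * (\tr X1 + 1)) = 2 * (t * alpha * \tr X1) + 2 * (t * alpha) by ring.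
  have : 0 < t * alpha by rewrite mulr_gt0.
  lra.
have Hta0 : 0 <= t * alpha by rewrite mulr_ge0 // ltW.
pose B := fdot C X1 + t * alpha * \tr X1.
have HMa : 0 < M * alpha by rewrite mulr_gt0.
have Hobj_le : forall z, RD1_feas C A alpha t z -> RD1_obj C A b M alpha z <= B.
  move=> z Hz; rewrite /RD1_obj /B.
  have := weak_dual HX1 Hz.
  have : 0 <= frob (ursubmx (Lmap C A z)) ^+ 2 / (M * alpha).
    by rewrite divr_ge0 ?sqr_ge0 // ltW.
  lra.
have HyDf : RD1_feas C A alpha t yD.
  rewrite /RD1_feas /=; apply: psdD; [exact: HyD | exact: psd_scal].
have HyDo : RD1_obj C A b M alpha yD = bty b yD.
  have [H12 _ _] := (Ha yD).1 HyD.
  by rewrite /RD1_obj H12 /frob fdot0 sqrtr0 expr0n /= mul0r subr0.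
set S := [set (RD1_obj C A b M alpha z)%:E | z in RD1_feas C A alpha t].
have HSle : (ereal_sup S <= B%:E)%E.
  by apply: ge_ereal_sup => _ [z Hz <-]; rewrite lee_fin; exact: Hobj_le.
have HSge : ((bty b yD)%:E <= ereal_sup S)%E.
  by apply: ereal_sup_ubound; exists yD => //; rewrite HyDo.
move: HSle HSge Hcvg; case: (ereal_sup S) => [l| |] //= HSle HSge Hcvg.
move/fine_cvgP: Hcvg => [_ Hcvg].
have Hz : bty b yD - 1/4 < l by move: HSge; rewrite lee_fin; lra.
have := cvgr_gt _ Hcvg _ Hz.
case=> N _ HN; exists N => k Hk.
have := HN k Hk; rewrite /= /RD1_obj.
have := Hobj_le (y k) (Hfeas k); rewrite /RD1_obj.
move=> _ Hlt.
have Hwd := weak_dual HX1 (Hfeas k).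
set q := frob _ ^+ 2 in Hlt *.
have Hu : q / (M * alpha) < vP C A b - vD C A b + 2 by lra.
have H' : q / (M * alpha) * (M * alpha) <= (vP C A b - vD C A b + 2) * (M * alpha).
  by rewrite ler_pM2r // ltW.
rewrite divfK ?gt_eqF // in H'.
rewrite /K; have -> : M * (vP C A b - vD C A b + 2) * alpha = (vP C A b - vD C A b + 2) * (M * alpha) by ring.
exact: H'.
Qed.
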